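(* Fix a constant $\gamma > 0$. In the real-time oblivious erasure correction protocol on $k$ message symbols, in order for the receiver to recover a $(1-\gamma)$ fraction of the message symbols, the feedback channel needs to successfully transmit at most $O(1)$ bits.
   Context: Real-time oblivious erasure correction protocol on $k$ message symbols $x_1,\dots,x_k \in \mathbb{F}_2$: a sender transmits an unbounded stream of encoding symbols over a binary erasure channel with unknown erasure rate. The sender maintains a counter $r$ (initially $0$), the number of symbols the receiver has decoded as reported via feedback. Each encoding symbol uses degree $d(r) = \lfloor (k+1)/(k-r) \rfloor$ for $0 \le r \le k-2$ (and $d(k-1)=k$): the sender picks $d=d(r)$ indices uniformly at random from $\{1,\dots,k\}$ and sends the XOR of the corresponding symbols together with the indices and $d$. The receiver processes each received encoding symbol immediately: if exactly one of its indices is unknown it recovers that symbol by XORing with the known symbols and increments its count $r$; otherwise it discards the symbol. The receiver sends a one-bit feedback message (acknowledgement) to the sender exactly when the value of $\lfloor (k+1)/(k-r)\rfloor$ changes (i.e., the current degree differs from it), and the sender then updates its counter. *)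

(* Defs.v *)
From mathcomp Require Import all_boot.
From Stdlib Require Import Reals.

Definition sender_degree (k r : nat) : nat :=
  if r == k.-1 then k else (k.+1 %/ (k - r))%N.

(* The receiver, having just incremented its count to r (1 <= r <= k-1),
   sends a one-bit acknowledgement exactly when floor((k+1)/(k-r)) differs
   from the degree currently used by the sender, which (all earlier
   acknowledgements having been delivered) is d(r-1). *)
Definition feedback_sent (k r : nat) : bool :=
  [&& (1 <= r)%N, (r <= k.-1)%N & (k.+1 %/ (k - r))%N != sender_degree k r.-1].

(* Number of feedback bits transmitted while the receiver is still short of
   a (1-gamma) fraction of the k message symbols, i.e. on the increments
   r-1 -> r with r-1 < (1-gamma) k (including the increment reaching the goal). *)
Definition feedback_bits_to_fraction (gamma : R) (k : nat) : nat :=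
  count (fun r => feedback_sent k r &&
                  (if Rlt_dec (INR r.-1) ((1 - gamma) * INR k)%R then true else false))
        (iota 1 k).

(* Main.v *)
Require Import Defs.
From mathcomp Require Import all_boot.
From Stdlib Require Import Reals.
From mathcomp Require Import zify.
From Stdlib Require Import Lra Lia.

Lemma count_steps (h : nat -> nat) (Q : pred nat) (B : nat) :
  (forall i j, (i <= j)%N -> Q j -> Q i) ->
  (forall i, Q i -> (h i <= h i.+1)%N) ->
  (forall i, Q i -> (h i.+1 <= B)%N) ->
  forall n, (count (fun i => Q i && (h i != h i.+1)) (iota 0 n) <= B)%N /\
    ((forall i, (i < n)%N -> Q i) ->
      (count (fun i => Q i && (h i != h i.+1)) (iota 0 n) + h 0 <= h n)%N).
Proof.
move=> Hdown Hmon HB; elim=> [|n [IH1 IH2]]; first by split.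
have -> : iota 0 n.+1 = iota 0 n ++ [:: n] by rewrite -addn1 iotaD.
rewrite count_cat /= addn0.
case HQ: (Q n) => /=.
- have Hall : forall i, (i < n)%N -> Q i.
    by move=> i Hi; apply: (Hdown i n) => //; lia.
  have H1 := IH2 Hall; have H2 := Hmon n HQ; have H3 := HB n HQ.
  case: eqP => Heq /=.
  + rewrite addn0; split; [lia | move=> _; lia].
  + split; [lia | move=> _; lia].
- rewrite addn0; split => // Hall.
  by move: (Hall n (ltnSn n)); rewrite HQ.
Qed.

Theorem lemma4 (gamma : R) (Hgamma : (0 < gamma)%R) :
  exists C : nat, forall k : nat, (feedback_bits_to_fraction gamma k <= C)%N.
Proof.
have [N HN] := INR_archimed gamma 1 Hgamma.
exists (2 * N)%N => k.
pose h j := (k.+1 %/ (k - j))%N.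
pose Q := fun i => (i.+1 <= k.-1)%N && (k < N * (k - i))%N.
rewrite /feedback_bits_to_fraction.
rewrite (_ : iota 1 k = map (addn 1) (iota 0 k)); last by rewrite -iotaDl.
rewrite count_map.
apply: leq_trans (_ : count (fun i => Q i && (h i != h i.+1)) (iota 0 k) <= _)%N.
  apply: sub_count => i /=; rewrite /feedback_sent /sender_degree.
  move=> /andP [/and3P [_ Hik Hne]].
  case: Rlt_dec => Hlt //= _.
  rewrite add0n in Hlt.
  have E : (i == k.-1) = false by apply/eqP; lia.
  rewrite E in Hne.
  rewrite /Q /h.
  have Hik' : (i < k.-1)%N by lia.
  rewrite Hik' /=.
  apply/andP; split; last by rewrite eq_sym; move: Hne; rewrite add1n.
  apply/ltP; apply: INR_lt.
  have Hk : (i < k)%N by lia.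
  rewrite mult_INR minus_INR; last by apply/leP; lia.
  have HiR : (INR i < INR k)%R by apply lt_INR; apply/ltP.
  have Hk0 : (0 < INR k)%R by have := pos_INR i; lra.
  have HN0 : (0 <= INR N)%R by apply pos_INR.
  have D : (INR k - INR i > gamma * INR k)%R by lra.
  have D1 : (INR N * (INR k - INR i) >= INR N * (gamma * INR k))%R.
    by apply Rle_ge, Rmult_le_compat_l; lra.
  have D2 : ((INR N * gamma - 1) * INR k > 0)%R.
    by apply Rmult_gt_0_compat; lra.
  nra.
have [] := (@count_steps h Q (2 * N) _ _ _ k) => //.
- move=> i j Hij /andP [H1 H2]; apply/andP; split; first lia.
  apply: (leq_trans H2); apply: leq_mul => //; lia.
- move=> i /andP [H1 H2]; rewrite /h.
  apply: leq_div2l; lia.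
- move=> i /andP [H1 H2]; rewrite /h -ltnS ltn_divLR; last lia.
  have H3 : (N * (k - i) <= N * (2 * (k - i.+1)))%N by apply: leq_mul => //; lia.
  have H4 : (N * (2 * (k - i.+1)) = 2 * N * (k - i.+1))%N by rewrite mulnA (mulnC N 2).
  lia.
Qed.
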